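(* Consider a weighted stochastic block model on vertex set $A\cup B$, where $A$ and $B$ are the two true communities, each of size $n$, and each pair $(i,j)$ receives an observed weight $w_{ij}$, drawn from $p_n$ if $i,j$ are in the same community and from $q_n$ otherwise. Let $d_n(x)=\log\frac{p_n(x)}{q_n(x)}$, and for disjoint vertex sets $\hat A,\hat B$ let $\mathcal S(\hat A,\hat B)=\sum_{i\in\hat A,\,j\in\hat B}d_n(w_{ij})$. If the maximum likelihood estimator of the community assignment does not coincide with the truth, then there exist an integer $1\le k\le\frac n2$ and sets $A_w\subset A$, $B_w\subset B$ with $|A_w|=|B_w|=k$ such that \[ \mathcal S(A_w,\bar A_w)+\mathcal S(B_w,\bar B_w)\le \mathcal S(A_w,\bar B_w)+\mathcal S(\bar A_w,B_w), \] where $\bar A_w=A\setminus A_w$ and $\bar B_w=B\setminus B_w$.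
   Context: $p_n$ and $q_n$ are mutually absolutely continuous (so that $d_n$ is well defined); they may be densities of continuous distributions or probability mass functions. *)

(* Defs.v *)
From HB Require Import structures.
From mathcomp Require Import all_boot all_order all_algebra.
From mathcomp Require Import reals exp.
Set Implicit Arguments. Unset Strict Implicit. Unset Printing Implicit Defensive.
Import Order.TTheory GRing.Theory Num.Theory.
Local Open Scope ring_scope.

(* Vertices are 'I_(n + n); a community assignment is given by the set [Ah]
   of vertices labelled "first community", the other community being [~: Ah]. *)

Section WSBM.
Variables (R : realType) (X : Type) (n : nat).
Variables (p q : X -> R) (w : 'I_(n + n) -> 'I_(n + n) -> X).

Definition dn (x : X) : R := ln (p x / q x).

Definition Sc (Ah Bh : {set 'I_(n + n)}) : R :=
  \sum_(i in Ah) \sum_(j in Bh) dn (w i j).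

Definition lik (Ah : {set 'I_(n + n)}) : R :=
  \prod_(i < n + n) \prod_(j < n + n | (i < j)%N)
     (if (i \in Ah) == (j \in Ah) then p (w i j) else q (w i j)).

Definition is_MLE (Ah : {set 'I_(n + n)}) : Prop :=
  #|Ah| = n /\ forall A' : {set 'I_(n + n)}, #|A'| = n -> lik A' <= lik Ah.

End WSBM.

(* Main.v *)
Require Import Defs.
From HB Require Import structures.
From mathcomp Require Import all_boot all_order all_algebra.
From mathcomp Require Import reals sequences exp.
From mathcomp Require Import ring lra zify.
Import Order.TTheory GRing.Theory Num.Theory.
Local Open Scope ring_scope.

Section Aux.
Variables (R : realType) (X : Type) (n : nat).
Variables (p q : X -> R) (w : 'I_(n + n) -> 'I_(n + n) -> X).
Hypothesis hw : forall i j, w i j = w j i.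
Hypothesis hp : forall i j, 0 < p (w i j).
Hypothesis hq : forall i j, 0 < q (w i j).

Let d i j := dn p q (w i j).

Lemma half_sum (h : 'I_(n+n) -> 'I_(n+n) -> R) :
  (forall i j, h i j = h j i) -> (forall i, h i i = 0) ->
  \sum_(i < n+n) \sum_(j < n+n) h i j = 2 * \sum_(i < n+n) \sum_(j < n+n | (i < j)%N) h i j.
Proof.
move=> hs h0.
have E : forall i j : 'I_(n+n), h i j = (if (i < j)%N then h i j else 0) + (if (j < i)%N then h j i else 0).
  move=> i j; case: (ltngtP i j) => H /=;
    [by rewrite addr0 | by rewrite add0r hs | by rewrite (val_inj H) h0 addr0].
rewrite (eq_bigr (fun i : 'I_(n+n) => \sum_(j < n+n) (if (i < j)%N then h i j else 0) +
   \sum_(j < n+n) (if (j < i)%N then h j i else 0))); last first.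
  by move=> i _; rewrite -big_split /=; apply: eq_bigr => j _; rewrite -E.
rewrite big_split /= [X in _ + X = _]exchange_big /= mulr2n mulrDl mul1r.
have H : \sum_(i < n+n) \sum_(j < n+n | (i < j)%N) h i j =
  \sum_(i < n+n) \sum_(j < n+n) (if (i < j)%N then h i j else 0).
  by apply: eq_bigr => i _; rewrite big_mkcond.
by rewrite H.
Qed.

Lemma lik_exp C : lik p q w C =
  expR (\sum_(i < n+n) \sum_(j < n+n | (i < j)%N) ln (if (i \in C) == (j \in C) then p (w i j) else q (w i j))).
Proof.
rewrite expR_sum; apply: eq_bigr => i _; rewrite expR_sum; apply: eq_bigr => j _.
by rewrite lnK // posrE; case: ifP.
Qed.

Let T (C : {set 'I_(n+n)}) := \sum_(i < n+n) \sum_(j < n+n | (i < j)%N) ((i \in C) == (j \in C))%:R * d i j.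

Lemma lik_T (A C : {set 'I_(n+n)}) : lik p q w A <= lik p q w C -> T A <= T C.
Proof.
have E : forall C : {set 'I_(n+n)}, \sum_(i < n+n) \sum_(j < n+n | (i < j)%N)
   ln (if (i \in C) == (j \in C) then p (w i j) else q (w i j)) =
   \sum_(i < n+n) \sum_(j < n+n | (i < j)%N) ln (q (w i j)) + T C.
  move=> D; rewrite /T -big_split; apply: eq_bigr => i _; rewrite -big_split.
  apply: eq_bigr => j _ /=; rewrite /d /dn ln_div ?posrE //.
  by case: ifP => _ /=; ring.
by rewrite !lik_exp ler_expR !E lerD2l.
Qed.

Lemma ScE (Y Z : {set 'I_(n+n)}) : Sc p q w Y Z = \sum_(i < n+n) \sum_(j < n+n) ((i \in Y) && (j \in Z))%:R * d i j.
Proof.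
rewrite /Sc big_mkcond; apply: eq_bigr => i _; case: (i \in Y) => /=.
  rewrite big_mkcond; apply: eq_bigr => j _; case: (j \in Z) => /=; rewrite /d ?mul1r ?mul0r //.
by symmetry; apply: big1 => j _; rewrite mul0r.
Qed.

Lemma main (A C : {set 'I_(n+n)}) : lik p q w A <= lik p q w C ->
  Sc p q w (A :\: C) (A :\: (A :\: C)) + Sc p q w (C :\: A) (~: A :\: (C :\: A))
       <= Sc p q w (A :\: C) (~: A :\: (C :\: A)) + Sc p q w (A :\: (A :\: C)) (C :\: A).
Proof.
move=> /lik_T HT; set Aw := A :\: C; set Bw := C :\: A; rewrite -subr_ge0 !ScE.
set K := fun i j : 'I_(n+n) =>
  (((i \in Aw) && (j \in ~: A :\: Bw))%:R * d i j +
   ((i \in A :\: Aw) && (j \in Bw))%:R * d i j) -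
  (((i \in Aw) && (j \in A :\: Aw))%:R * d i j +
   ((i \in Bw) && (j \in ~: A :\: Bw))%:R * d i j).
have -> : \sum_(i < n+n) \sum_(j < n+n) (((i \in Aw) && (j \in ~: A :\: Bw))%:R * d i j) +
   \sum_(i < n+n) \sum_(j < n+n) (((i \in A :\: Aw) && (j \in Bw))%:R * d i j) -
  (\sum_(i < n+n) \sum_(j < n+n) (((i \in Aw) && (j \in A :\: Aw))%:R * d i j) +
   \sum_(i < n+n) \sum_(j < n+n) (((i \in Bw) && (j \in ~: A :\: Bw))%:R * d i j)) =
  \sum_(i < n+n) \sum_(j < n+n) K i j.
  rewrite [RHS](eq_bigr (fun i : 'I_(n+n) => (\sum_(j < n+n) (((i \in Aw) && (j \in ~: A :\: Bw))%:R * d i j) +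
   \sum_(j < n+n) (((i \in A :\: Aw) && (j \in Bw))%:R * d i j)) -
  (\sum_(j < n+n) (((i \in Aw) && (j \in A :\: Aw))%:R * d i j) +
   \sum_(j < n+n) (((i \in Bw) && (j \in ~: A :\: Bw))%:R * d i j)))); last first.
    by move=> i _; rewrite /K /= sumrB !big_split.
  by rewrite [RHS]sumrB !big_split.
set h := fun i j : 'I_(n+n) =>
  (((i \in C) == (j \in C))%:R - ((i \in A) == (j \in A))%:R) * d i j.
have dsym : forall i j, d i j = d j i by move=> i j; rewrite /d hw.
have hK : forall i j, h i j = K i j + K j i.
  move=> i j; rewrite /h /K (dsym j i) /Aw /Bw !inE.
  by case: (i \in A); case: (i \in C); case: (j \in A); case: (j \in C) => /=; ring.
have hs : \sum_(i < n+n) \sum_(j < n+n) h i j = 2 * (T C - T A).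
  rewrite half_sum; last 2 first.
  - by move=> i j; rewrite /h dsym eq_sym [(j \in A) == _]eq_sym.
  - by move=> i; rewrite /h !eqxx subrr mul0r.
  congr (_ * _); rewrite /T -sumrB; apply: eq_bigr => i _; rewrite -sumrB.
  by apply: eq_bigr => j _; rewrite /h mulrBl.
have : \sum_(i < n+n) \sum_(j < n+n) h i j = 2 * \sum_(i < n+n) \sum_(j < n+n) K i j.
  rewrite (eq_bigr (fun i : 'I_(n+n) => \sum_(j < n+n) K i j + \sum_(j < n+n) K j i)); last first.
    by move=> i _; rewrite -big_split; apply: eq_bigr => j _; rewrite hK.
  by rewrite big_split /= [X in _ + X = _]exchange_big /= mulr2n mulrDl mul1r.
rewrite hs => /eqP; rewrite (inj_eq (mulfI _)) ?pnatr_eq0 // => /eqP <-.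
by rewrite subr_ge0.
Qed.

End Aux.

Lemma likC (R : realType) (X : Type) (n : nat)
  (p q : X -> R) (w : 'I_(n + n) -> 'I_(n + n) -> X) C :
  lik p q w (~: C) = lik p q w C.
Proof.
rewrite /lik; apply: eq_bigr => i _; apply: eq_bigr => j _.
by rewrite !inE; case: (i \in C); case: (j \in C).
Qed.

Lemma card_pos (n : nat) (A C : {set 'I_(n + n)}) :
  #|A| = n -> #|C| = n -> C != A -> (1 <= #|A :\: C|)%N.
Proof.
move=> hA hC hne; rewrite lt0n; apply/negP => /eqP /cards0_eq H.
move: hne; have sub : A \subset C by rewrite -setD_eq0 H.
have := subset_leqif_cards sub; rewrite hA hC => -[_ /esym].
by rewrite eqxx => /eqP ->; rewrite eqxx.
Qed.

Theorem lemma1 (R : realType) (X : Type) (n : nat)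
  (p q : X -> R) (w : 'I_(n + n) -> 'I_(n + n) -> X)
  (A : {set 'I_(n + n)}) :
  (forall i j, w i j = w j i) ->
  (forall i j, 0 < p (w i j)) ->
  (forall i j, 0 < q (w i j)) ->
  #|A| = n ->
  (exists Ah : {set 'I_(n + n)},
      is_MLE p q w Ah /\ Ah != A /\ Ah != ~: A) ->
  exists k : nat, (1 <= k)%N /\ (k <= n./2)%N /\
  exists Aw Bw : {set 'I_(n + n)},
    [/\ Aw \subset A, Bw \subset ~: A, #|Aw| = k, #|Bw| = k &
     Sc p q w Aw (A :\: Aw) + Sc p q w Bw (~: A :\: Bw)
       <= Sc p q w Aw (~: A :\: Bw) + Sc p q w (A :\: Aw) Bw].
Proof.
move=> hw hp hq hA [Ah [[hAh hmax] [ne1 ne2]]].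
have gen : forall C : {set 'I_(n + n)}, #|C| = n -> C != A ->
    lik p q w A <= lik p q w C -> (#|A :\: C| <= n./2)%N ->
    exists k : nat, (1 <= k)%N /\ (k <= n./2)%N /\
    exists Aw Bw : {set 'I_(n + n)},
    [/\ Aw \subset A, Bw \subset ~: A, #|Aw| = k, #|Bw| = k &
     Sc p q w Aw (A :\: Aw) + Sc p q w Bw (~: A :\: Bw)
       <= Sc p q w Aw (~: A :\: Bw) + Sc p q w (A :\: Aw) Bw].
  move=> C hC hne hl hk; exists #|A :\: C|; split; first exact: card_pos.
  split=> //; exists (A :\: C), (C :\: A); split.
  - exact: subsetDl.
  - by rewrite setDE setIC subsetIl.
  - by [].
  - have h1 := cardsD A C; have h2 := cardsD C A.
    by rewrite h1 h2 hA hC setIC.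
  - exact: (@main _ _ _ _ _ _ hw hp hq _ _ hl).
have hCn : #|~: Ah| = n by rewrite cardsCs setCK card_ord hAh; lia.
have hd : (n./2 + n./2 <= n)%N /\ (n <= (n./2 + n./2).+1)%N.
  have := odd_double_half n; rewrite -addnn; case: (odd n) => /= <-; lia.
have hI : (#|A :&: Ah| <= #|A|)%N by rewrite subset_leq_card // subsetIl.
rewrite hA in hI.
have hD := cardsD A Ah.
case: (leqP #|A :\: Ah| n./2) => hk.
  by apply: (gen Ah) => //; apply: hmax.
apply: (gen (~: Ah)) => //.
- by apply: contraNneq ne2 => <-; rewrite setCK.
- by rewrite likC; apply: hmax.
- by rewrite setDE setCK; move: hk; rewrite hD hA; lia.
Qed.
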